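(* Let $k\in\mathbb{N}$ and $\tilde P,\tilde Q\in\mathbb{R}[x]$. There exist $P,Q\in\mathbb{C}[x]$ satisfying (i) $\deg P\le k$, $\deg Q\le k-1$; (ii) $P$ has parity $(k\bmod 2)$ and $Q$ has parity $(k-1\bmod 2)$; (iii) $|P(x)|^2+(1-x^2)|Q(x)|^2=1$ for all $x\in[-1,1]$; and moreover $\Re[P]=\tilde P$, $\Re[Q]=\tilde Q$, if and only if $\tilde P,\tilde Q$ satisfy (i) and (ii) (with $\tilde P,\tilde Q$ in place of $P,Q$) and (vi) for all $x\in[-1,1]$: $\tilde P(x)^2+(1-x^2)\tilde Q(x)^2\le 1$.
   Context: For $P(x)=\sum_j a_jx^j\in\mathbb{C}[x]$, $\Re[P](x):=\sum_j \Re(a_j)x^j$. A polynomial is even (odd) if all its odd-power (even-power) coefficients vanish; the zero polynomial is both; parity $z$ means even if $z$ even and odd if $z$ odd. *)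

(* Defs.v *)
From HB Require Import structures.
From mathcomp Require Import all_boot all_order all_algebra.
Set Implicit Arguments. Unset Strict Implicit. Unset Printing Implicit Defensive.
Import Order.TTheory GRing.Theory Num.Theory.
Local Open Scope ring_scope.

Definition poly_even (R : nzRingType) (p : {poly R}) : Prop :=
  forall j : nat, odd j -> p`_j = 0.
Definition poly_odd (R : nzRingType) (p : {poly R}) : Prop :=
  forall j : nat, ~~ odd j -> p`_j = 0.
Definition has_parity (R : nzRingType) (z : nat) (p : {poly R}) : Prop :=
  if odd z then poly_odd p else poly_even p.

Definition poly_Re (C : numClosedFieldType) (p : {poly C}) : {poly C} :=
  \poly_(j < size p) 'Re (p`_j).

(* Main.v *)
Require Import Defs.
From HB Require Import structures.
From mathcomp Require Import all_boot all_order all_algebra.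
From mathcomp Require Import ring zify.
Import Order.TTheory GRing.Theory Num.Theory.
Local Open Scope ring_scope.
Set Implicit Arguments. Unset Strict Implicit.

Lemma predD_le a b a' b' : (a <= a')%N -> (b <= b')%N -> ((a + b).-1 <= (a' + b').-1)%N.
Proof. lia. Qed.

Section Work.
Variable C : numClosedFieldType.
Local Notation RP := (polyOver (@Num.Def.real_num_pred C)).

Definition par (b : bool) (p : {poly C}) := forall j, odd j != b -> p`_j = 0.

Lemma hasparE z p : has_parity z p <-> par (odd z) p.
Proof.
rewrite /has_parity /par /poly_odd /poly_even; case: (odd z); split=> H j.
- by move=> hj; apply: H; move: hj; case: (odd j).
- by move=> hj; apply: H; move: hj; case: (odd j).
- by move=> hj; apply: H; move: hj; case: (odd j).
- by move=> hj; apply: H; move: hj; case: (odd j).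
Qed.

Lemma par_eq b b' p : b = b' -> par b p -> par b' p.
Proof. by move=> ->. Qed.

Lemma par0 b : par b 0.
Proof. by move=> j _; rewrite coef0. Qed.

Lemma parD b p q : par b p -> par b q -> par b (p + q).
Proof. by move=> hp hq j hj; rewrite coefD hp ?hq ?addr0. Qed.

Lemma parN b p : par b p -> par b (- p).
Proof. by move=> hp j hj; rewrite coefN hp ?oppr0. Qed.

Lemma parZ b c p : par b p -> par b (c *: p).
Proof. by move=> hp j hj; rewrite coefZ hp ?mulr0. Qed.

Lemma parC c : par false c%:P.
Proof. by move=> [|j] //= _; rewrite coefC. Qed.

Lemma parX : par true 'X.
Proof. by move=> [|[|j]] //= _; rewrite coefX. Qed.

Lemma parM b c p q : par b p -> par c q -> par (b (+) c) (p * q).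
Proof.
move=> hp hq j hj; rewrite coefM big1 // => -[i /=]; rewrite ltnS => hij _.
have [hi|hi] := eqVneq (odd i) b; last by rewrite hp ?mul0r.
rewrite hq ?mulr0 // oddB // hi; move: hj; rewrite -hi.
by destruct (odd j), (odd i), c.
Qed.

Lemma parXn n : par (odd n) ('X^n).
Proof.
elim: n => [|n IH]; first by rewrite expr0; exact: parC.
rewrite exprS; apply: par_eq (parM parX IH); by [] .
Qed.

Lemma par1mX2 : par false (1 - 'X^2).
Proof. by apply: parD; [exact: parC | apply: parN; exact: (@parXn 2)]. Qed.

Lemma RPP (p : {poly C}) : reflect (forall i, p`_i \is Num.real) (p \in RP).
Proof. exact: polyOverP. Qed.

Lemma RP_horner (p : {poly C}) x : p \in RP -> x \is Num.real -> p.[x] \is Num.real.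
Proof. by move=> hp hx; exact: (rpred_horner hp hx). Qed.

Lemma RPC c : c \is Num.real -> c%:P \in RP.
Proof. by move=> hc; rewrite polyOverC. Qed.

Lemma RPX : 'X \in RP.
Proof. exact: polyOverX. Qed.

Lemma RP_conj (p : {poly C}) : p \in RP -> map_poly (@Num.conj_op C) p = p.
Proof.
move/RPP=> hp; apply/polyP => i; rewrite coef_map /=.
by apply/CrealP.
Qed.

Lemma conj_RP (p : {poly C}) : map_poly (@Num.conj_op C) p = p -> p \in RP.
Proof.
move=> h; apply/RPP => i; apply/CrealP; by rewrite -coef_map /= h.
Qed.

Lemma coef_Re (p : {poly C}) j : (poly_Re p)`_j = 'Re (p`_j).
Proof.
rewrite /poly_Re coef_poly; case: ltnP => // hj.
by rewrite nth_default // raddf0.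
Qed.


Definition Good (m : nat) (F : {poly C}) :=
  exists A B : {poly C}, [/\ A \in RP, B \in RP,
    (size A <= m.+1)%N /\ (size B <= m)%N,
    par (odd m) A /\ par (~~ odd m) B &
    F = A ^+ 2 + (1 - 'X^2) * B ^+ 2].

Lemma size_1mX2 : (size (1 - 'X^2 : {poly C})%R <= 3)%N.
Proof.
rewrite (leq_trans (size_add _ _)) // size_opp size_polyXn size_poly1 //.
Qed.

Lemma good_mul m n F1 F2 : Good m F1 -> Good n F2 -> Good (m + n) (F1 * F2).
Proof.
move=> [A1 [B1 [rA1 rB1 [sA1 sB1] [pA1 pB1] ->]]].
move=> [A2 [B2 [rA2 rB2 [sA2 sB2] [pA2 pB2] ->]]].
exists (A1 * A2 - (1 - 'X^2) * B1 * B2), (A1 * B2 + A2 * B1); split.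
- rewrite rpredB ?rpredM ?rpredB ?rpred1 ?rpredX ?polyOverX //.
- by rewrite rpredD ?rpredM.
- split.
  + rewrite (leq_trans (size_add _ _)) // size_opp geq_max; apply/andP; split.
      rewrite (leq_trans (size_mul_leq _ _)) //; apply: leq_trans (predD_le sA1 sA2) _; lia.
    rewrite (leq_trans (size_mul_leq _ _)) //.
    have h : (size ((1 - 'X^2) * B1)%R <= m.+2)%N.
      rewrite (leq_trans (size_mul_leq _ _)) //; exact: (leq_trans (predD_le size_1mX2 sB1)).
    apply: leq_trans (predD_le h sB2) _; lia.
  + rewrite (leq_trans (size_add _ _)) // geq_max; apply/andP; split;
      rewrite (leq_trans (size_mul_leq _ _)) //.
      apply: leq_trans (predD_le sA1 sB2) _; lia.
    apply: leq_trans (predD_le sA2 sB1) _; lia.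
- split.
  + apply: parD; first by apply: par_eq (parM pA1 pA2); rewrite oddD.
    apply: parN; apply: par_eq (parM (parM par1mX2 pB1) pB2).
    by rewrite oddD; case: (odd m); case: (odd n).
  + apply: parD; first by apply: par_eq (parM pA1 pB2); rewrite oddD;
      case: (odd m); case: (odd n).
    by apply: par_eq (parM pA2 pB1); rewrite oddD; case: (odd m); case: (odd n).
- ring.
Qed.

Lemma good_one : Good 1 1.
Proof.
exists 'X, 1; split; rewrite ?polyOverX ?rpred1 ?size_polyX ?size_poly1 //.
- split; [exact: parX | exact: parC].
- ring.
Qed.

Lemma good_mono m n F : (m <= n)%N -> Good m F -> Good n F.
Proof.
move=> /subnKC <-; elim: (n - m)%N => [|d IH] h; first by rewrite addn0.
by rewrite addnS -addn1 -[F]mulr1; apply: good_mul (IH h) good_one.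
Qed.

Lemma good_const c : 0 <= c -> Good 0 c%:P.
Proof.
move=> hc; exists (sqrtC c)%:P, 0; split.
- by rewrite RPC // sqrtC_real.
- exact: rpred0.
- by rewrite size_polyC size_poly0; case: (_ != _).
- by split; [exact: parC | exact: par0].
- by rewrite expr0n /= mulr0 addr0 -polyC_exp sqrtCK.
Qed.


Lemma good_lin2 (u v : C) : 0 <= u -> 0 <= v ->
  Good 1 ((u - v)%:P * 'X^2 + v%:P).
Proof.
move=> hu hv; exists ((sqrtC u)%:P * 'X), (sqrtC v)%:P; split.
- by rewrite rpredM ?RPC ?sqrtC_real ?polyOverX.
- by rewrite RPC ?sqrtC_real.
- split; last exact: size_polyC_leq1.
  rewrite (leq_trans (size_mul_leq _ _)) // size_polyX.
  by have := size_polyC_leq1 (sqrtC u); case: (size _) => [|[]].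
- split; last exact: parC.
  by apply: par_eq (parM (parC _) parX).
- rewrite exprMn -!polyC_exp !sqrtCK polyCB; ring.
Qed.

Lemma good_linpos r : r \is Num.real -> r <= 0 -> Good 1 ('X^2 - r%:P).
Proof.
move=> hr hr0; have := @good_lin2 (1 - r) (- r).
rewrite opprK subrK subr_ge0 oppr_ge0 (le_trans hr0 ler01) => /(_ isT hr0).
by rewrite polyCN mul1r.
Qed.

Lemma good_linneg r : 1 <= r -> Good 1 (r%:P - 'X^2).
Proof.
move=> hr; have := @good_lin2 (r - 1) r.
rewrite subr_ge0 hr (le_trans ler01 hr) => /(_ isT isT).
have -> : r - 1 - r = -1 by ring.
by rewrite polyCN mulN1r addrC.
Qed.

Lemma good_sq r : r \is Num.real -> Good 2 (('X^2 - r%:P) ^+ 2).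
Proof.
move=> hr; exists ('X^2 - r%:P), 0; split.
- by rewrite rpredB ?RPC ?rpredX ?polyOverX.
- exact: rpred0.
- split; last by rewrite size_poly0.
  by rewrite size_XnsubC.
- split; last exact: par0.
  by apply: parD; [exact: (@parXn 2) | apply: parN; exact: parC].
- by rewrite expr0n /= mulr0 addr0.
Qed.


Lemma good_quad r : Good 2 (('X^2 - r%:P) * ('X^2 - (r^*)%:P)).
Proof.
set a := 'Re r; set b := 'Im r; set rho := `|r|.
have ra : a \is Num.real by exact: Creal_Re.
have rb : b \is Num.real by exact: Creal_Im.
have rrho : rho \is Num.real by exact: normr_real.
have rho0 : 0 <= rho by exact: normr_ge0.
have hab : rho ^+ 2 = a ^+ 2 + b ^+ 2 by exact: normC2_Re_Im.
have hprod : r * r^* = rho ^+ 2 by rewrite normCK.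
have hsum : r + r^* = 2%:R * a by rewrite /a ReE mulrC divfK // pnatr_eq0.
set D := rho ^+ 2 + 1 - 2%:R * a.
have D0 : 0 <= D.
  have -> : D = (a - 1) ^+ 2 + b ^+ 2 by rewrite /D hab; ring.
  by rewrite addr_ge0 // real_exprn_even_ge0 // rpredB // rpred1.
set t := sqrtC D.
have t0 : 0 <= t by rewrite sqrtC_ge0.
have ht2 : t ^+ 2 = D by exact: sqrtCK.
have rt : t \is Num.real by exact: sqrtC_real.
set p := rho + t.
have p0 : 0 <= p by exact: addr_ge0.
have rp : p \is Num.real by exact: rpredD.
have hp2 : r + r^* = 1 + 2%:R * p * rho - p ^+ 2.
  rewrite hsum; have -> : 2%:R * a = rho ^+ 2 + 1 - D by rewrite /D; ring.
  by rewrite -ht2 /p; ring.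
have hp1 : 1 <= p.
  have hare : a <= rho := (leif_Re_Creal r).1.
  have := real_leVge rrho (rpred1 _); case/orP => h1.
    have h1r : 0 <= 1 - rho by rewrite subr_ge0.
    have : 1 - rho <= t.
      rewrite -ler_sqr ?nnegrE // -subr_ge0.
      have -> : t ^+ 2 - (1 - rho) ^+ 2 = 2%:R * (rho - a) by rewrite ht2 /D; ring.
      by rewrite mulr_ge0 ?ler0n // subr_ge0.
    by rewrite /p -(lerD2l rho) addrC subrK.
  by apply: le_trans h1 _; rewrite /p lerDl.
have s0 : 0 <= p ^+ 2 - 1 by rewrite subr_ge0 exprn_ege1.
set s := sqrtC (p ^+ 2 - 1).
have hs2 : s ^+ 2 = p ^+ 2 - 1 by exact: sqrtCK.
have rs : s \is Num.real by exact: sqrtC_real.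
exists (p%:P * 'X^2 - rho%:P), (s%:P * 'X); split.
- by rewrite rpredB ?rpredM ?RPC ?rpredX ?polyOverX.
- by rewrite rpredM ?RPC ?polyOverX.
- split.
    rewrite (leq_trans (size_add _ _)) // size_opp geq_max; apply/andP; split.
      rewrite (leq_trans (size_mul_leq _ _)) // size_polyXn.
      by have := size_polyC_leq1 p; case: (size _) => [|[]].
    by rewrite (leq_trans (size_polyC_leq1 _)).
  rewrite (leq_trans (size_mul_leq _ _)) // size_polyX.
  by have := size_polyC_leq1 s; case: (size _) => [|[]].
- split.
    by apply: parD; [apply: par_eq (parM (parC _) (@parXn 2)) | apply: parN; exact: parC].
  by apply: par_eq (parM (parC _) parX).
- clearbody s p t D rho b a.
  have -> : ('X^2 - r%:P) * ('X^2 - (r^*)%:P) =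
     'X^4 - (r + r^*)%:P * 'X^2 + (r * r^*)%:P by rewrite polyCD polyCM; ring.
  rewrite hp2 hprod exprMn -polyC_exp hs2; rewrite !(polyCD, polyCB, polyCM, polyC_exp).
  ring.
Qed.


Lemma poly_bound (q : {poly C}) (R : C) : 0 <= R ->
  exists M, 0 <= M /\ forall y, `|y| <= R -> `|q.[y]| <= M.
Proof.
move=> R0; elim/poly_ind: q => [|p c [M [M0 HM]]].
  by exists 0; split => // y _; rewrite horner0 normr0.
exists (M * R + `|c|); split; first by rewrite addr_ge0 ?mulr_ge0.
move=> y hy; rewrite hornerD hornerMX hornerC.
apply: le_trans (ler_normD _ _) _; rewrite lerD2r normrM.
by apply: ler_pM => //; apply: HM.
Qed.

Lemma loc_pos (p : {poly C}) a : p \in RP -> a \is Num.real -> 0 < p.[a] ->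
  exists2 e, 0 < e & forall y, y \is Num.real -> `|y - a| < e -> 0 < p.[y].
Proof.
move=> rp ra pa.
have : root (p - p.[a]%:P) a by rewrite rootE hornerD hornerN hornerC subrr.
case/factor_theorem => q hq.
have [M [M0 HM]] := @poly_bound q (`|a| + 1) (addr_ge0 (normr_ge0 _) ler01).
have Mpa : 0 < M + p.[a] by rewrite ltr_wpDl.
exists (p.[a] / (M + p.[a])); first by rewrite divr_gt0.
move=> y ry hy.
have e1 : p.[a] / (M + p.[a]) <= 1 by rewrite ler_pdivrMr // mul1r lerDr.
have hy1 : `|y - a| <= 1 := le_trans (ltW hy) e1.
have hyR : `|y| <= `|a| + 1.
  have -> : y = a + (y - a) by ring.
  by apply: le_trans (ler_normD _ _) _; rewrite lerD2l.
have epy : p.[y] = p.[a] + q.[y] * (y - a).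
  have := congr1 (fun P => P.[y]) hq; rewrite /= hornerD hornerN hornerC.
  by rewrite hornerM hornerXsubC => <-; ring.
set d := q.[y] * (y - a).
have rd : d \is Num.real.
  by rewrite (_ : d = p.[y] - p.[a]) ?rpredB ?RP_horner // epy addrC addKr.
have hd : `|d| < p.[a].
  rewrite /d normrM; apply: le_lt_trans (_ : M * (p.[a] / (M + p.[a])) < _).
    by apply: ler_pM; rewrite ?normr_ge0 //; [apply: HM | exact: ltW].
  rewrite mulrA ltr_pdivrMr // -subr_gt0.
  have -> : p.[a] * (M + p.[a]) - M * p.[a] = p.[a] * p.[a] by ring.
  by rewrite mulr_gt0.
rewrite epy; apply: lt_le_trans (_ : 0 < p.[a] - `|d|) _; first by rewrite subr_gt0.
rewrite lerD2l -/d -normrN lerNl; apply: real_ler_norm; by rewrite rpredN.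
Qed.


Lemma loc_pos2 (p : {poly C}) a d : p \in RP -> a \is Num.real -> 0 < p.[a] -> 0 < d ->
  exists e, [/\ 0 < e, e < d, 0 < p.[a + e] & 0 < p.[a - e]].
Proof.
move=> rp ra pa d0; have [e e0 He] := loc_pos rp ra pa.
have ed0 : 0 < e + d by rewrite addr_gt0.
exists (e * d / (e + d)); split.
- by rewrite divr_gt0 ?mulr_gt0.
- rewrite ltr_pdivrMr // -subr_gt0.
  have -> : d * (e + d) - e * d = d * d by ring.
  by rewrite mulr_gt0.
- have re : e * d / (e + d) \is Num.real by apply: gtr0_real; rewrite divr_gt0 ?mulr_gt0.
  have el : e * d / (e + d) < e.
    rewrite ltr_pdivrMr // -subr_gt0.
    have -> : e * (e + d) - e * d = e * e by ring.
    by rewrite mulr_gt0.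
  apply: He; first by rewrite rpredD.
  rewrite addrC addKr gtr0_norm //; by rewrite divr_gt0 ?mulr_gt0.
- have re : e * d / (e + d) \is Num.real by apply: gtr0_real; rewrite divr_gt0 ?mulr_gt0.
  have el : e * d / (e + d) < e.
    rewrite ltr_pdivrMr // -subr_gt0.
    have -> : e * (e + d) - e * d = e * e by ring.
    by rewrite mulr_gt0.
  apply: He; first by rewrite rpredB.
  have -> : a - e * d / (e + d) - a = - (e * d / (e + d)) by ring.
  rewrite normrN gtr0_norm //; by rewrite divr_gt0 ?mulr_gt0.
Qed.

Lemma half_add : 2^-1 + 2^-1 = 1 :> C.
Proof. by field. Qed.

Lemma half_gt0 : 0 < 2^-1 :> C.
Proof. by rewrite invr_gt0 ltr0n. Qed.

Lemma at_pt (H : {poly C}) r : H \in RP -> r \is Num.real -> 0 <= r -> r <= 1 ->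
  (forall y, y \is Num.real -> 0 <= y -> y <= 1 -> y != r -> 0 <= H.[y]) ->
  0 <= H.[r].
Proof.
move=> rH rr r0 r1 hH.
have rHr : H.[r] \is Num.real by exact: RP_horner.
rewrite real_leNgt ?rpred0 //; apply/negP => Hneg.
have rnH : - H \in RP by rewrite rpredN.
have := @loc_pos2 (- H) r 2^-1 rnH rr; rewrite hornerN oppr_gt0 => /(_ Hneg half_gt0).
case=> e [e0 eh Hp Hm]; rewrite !hornerN !oppr_gt0 in Hp Hm.
have re : e \is Num.real by exact: gtr0_real.
have := real_leVge rr (gtr0_real half_gt0); case/orP => hr.
- have : 0 <= H.[r + e].
    apply: hH.
    + by rewrite rpredD.
    + by rewrite addr_ge0 // ltW.
    + by rewrite -half_add lerD // ltW.
    + by rewrite -subr_eq0 addrC addKr gt_eqF.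
  by move=> h; have := lt_le_trans Hp h; rewrite ltxx.
- have : 0 <= H.[r - e].
    apply: hH; rewrite ?rpredB //.
    + by rewrite subr_ge0 ltW // (lt_le_trans eh hr).
    + by rewrite (le_trans _ r1) // gerBl ltW.
    + by rewrite -subr_eq0 (_ : r - e - r = - e) ?oppr_eq0 ?gt_eqF //; ring.
  by move=> h; have := lt_le_trans Hm h; rewrite ltxx.
Qed.


Lemma interior (H : {poly C}) r : H \in RP -> r \is Num.real -> 0 < r -> r < 1 ->
  (forall y, y \is Num.real -> 0 <= y -> y <= 1 -> 0 <= (y - r) * H.[y]) ->
  H.[r] = 0.
Proof.
move=> rH rr r0 r1 hH.
have rHr : H.[r] \is Num.real by exact: RP_horner.
case: (boolP (0 < H.[r])) => hpos.
  have [e [e0 eh Hp Hm]] := loc_pos2 rH rr hpos r0.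
  have re : e \is Num.real by exact: gtr0_real.
  have := hH (r - e); rewrite rpredB // subr_ge0 (ltW eh).
  rewrite (le_trans _ (ltW r1)) ?gerBl ?(ltW e0) //.
  have -> : r - e - r = - e by ring.
  move=> /(_ isT isT isT); rewrite mulNr oppr_ge0 => h.
  by have := lt_le_trans (mulr_gt0 e0 Hm) h; rewrite ltxx.
case: (boolP (H.[r] < 0)) => hneg.
  have rnH : - H \in RP by rewrite rpredN.
  have := @loc_pos2 (- H) r (1 - r) rnH rr; rewrite hornerN oppr_gt0 subr_gt0.
  case/(_ hneg r1) => e [e0 eh Hp Hm]; rewrite !hornerN !oppr_gt0 in Hp Hm.
  have re : e \is Num.real by exact: gtr0_real.
  have := hH (r + e); rewrite rpredD // addr_ge0 ?(ltW r0) ?(ltW e0) //.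
  have -> : r + e <= 1 by rewrite -lerBrDl ltW.
  have -> : r + e - r = e by ring.
  move=> /(_ isT isT isT) h.
  have h2 : 0 < - H.[r + e] by rewrite oppr_gt0.
  have := mulr_gt0 e0 h2; rewrite mulrN oppr_gt0 => h3.
  by have := lt_le_trans h3 h; rewrite ltxx.
by apply/eqP; rewrite eq_le !real_leNgt ?rpred0 // hpos hneg.
Qed.


Local Notation cj := (map_poly (@Num.conj_op C)).

Lemma real_div (G q L : {poly C}) : G \in RP -> L \in RP -> L != 0 ->
  G = q * L -> q \in RP.
Proof.
move=> rG rL L0 hG; apply: conj_RP; apply: (mulIf L0).
have := congr1 cj hG; rewrite rmorphM /= (RP_conj rG) (RP_conj rL) => <-.
by rewrite hG.
Qed.

Lemma RP_XsubC r : r \is Num.real -> 'X - r%:P \in RP.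
Proof. by move=> hr; rewrite rpredB ?polyOverX ?RPC. Qed.

Lemma XsubC_neq0 (r : C) : 'X - r%:P != 0.
Proof. by rewrite -size_poly_eq0 size_XsubC. Qed.

Lemma root_conj (G : {poly C}) r : G \in RP -> root G r -> root G r^*.
Proof.
move=> rG; rewrite !rootE => /eqP h.
by rewrite -(RP_conj rG) horner_map /= h conjC0.
Qed.

Lemma comp_XsubC (r : C) : ('X - r%:P) \Po 'X^2 = 'X^2 - r%:P.
Proof. by rewrite comp_polyB comp_polyX comp_polyC. Qed.


Definition nonneg01 (G : {poly C}) :=
  forall y, y \is Num.real -> 0 <= y -> y <= 1 -> 0 <= G.[y].

Lemma nonneg_ex (H : {poly C}) r : H \in RP -> r \is Num.real -> 0 <= r -> r <= 1 ->
  (forall y, y \is Num.real -> 0 <= y -> y <= 1 -> y != r -> 0 <= H.[y]) ->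
  nonneg01 H.
Proof.
move=> rH rr r0 r1 hH y ry y0 y1; have [->|ne] := eqVneq y r; last exact: hH.
exact: at_pt.
Qed.

Lemma main_ind n : forall G : {poly C}, (size G <= n)%N -> G \in RP -> G != 0 ->
  nonneg01 G -> Good (size G).-1 (G \Po 'X^2).
Proof.
elim: n => [|n IH] G sG rG G0 nG.
  by move: G0; rewrite -size_poly_eq0; move: sG; case: (size G).
have step : forall H L d, H \in RP -> G = H * L -> size L = d.+2 ->
    Good d.+1 (L \Po 'X^2) -> nonneg01 H -> Good (size G).-1 (G \Po 'X^2).
  move=> H L d rH hGHL sL gL nH.
  have L0 : L != 0 by rewrite -size_poly_eq0 sL.
  have H0 : H != 0 by apply: contraNneq G0 => H0; rewrite hGHL H0 mul0r.
  have sGHL : size G = (size H + d.+2).-1 by rewrite hGHL size_mul // sL.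
  have sH0 : (0 < size H)%N by rewrite size_poly_gt0.
  have gH := IH H ltac:(move: sG; rewrite sGHL; lia) rH H0 nH.
  rewrite hGHL comp_polyM.
  have -> : (size (H * L)).-1 = ((size H).-1 + d.+1)%N.
    by rewrite -hGHL sGHL; move: sH0; clear; lia.
  exact: good_mul.
have [/eq_leq/size1_polyC hc|hs1] := eqVneq (size G) 1%N.
  rewrite hc comp_polyC size_polyC.
  have c0 : 0 <= G`_0 by have := nG 0 (rpred0 _) (lexx _) ler01; rewrite {1}hc hornerC.
  case: (G`_0 != 0); exact: good_const.
have [r hr] := closed_rootP G hs1.
case/factor_theorem: (hr) => q hq.
case: (boolP (r \is Num.real)) => rr; last first.
  have rc : r^* != r by rewrite -CrealE.
  have : root q r^*.
    have := root_conj rG hr; rewrite hq rootE hornerM hornerXsubC mulf_eq0.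
    by rewrite subr_eq0 (negPf rc) orbF.
  case/factor_theorem => q2 hq2.
  set L := ('X - r%:P) * ('X - (r^*)%:P).
  have rL : L \in RP.
    apply: conj_RP; rewrite /L rmorphM /= !rmorphB /= !map_polyX !map_polyC /= conjCK.
    by rewrite mulrC.
  have L0 : L != 0 by rewrite mulf_neq0 ?XsubC_neq0.
  have hG : G = q2 * L by rewrite hq hq2 /L; ring.
  have rq2 : q2 \in RP by exact: real_div rG rL L0 hG.
  apply: (step q2 L 1%N rq2 hG).
  - by rewrite /L size_mul ?XsubC_neq0 // !size_XsubC.
  - by rewrite /L comp_polyM !comp_XsubC; exact: good_quad.
  - move=> y ry y0 y1; have := nG y ry y0 y1; rewrite hG hornerM.
    have -> : L.[y] = `|y - r| ^+ 2.
      rewrite /L hornerM !hornerXsubC normCK rmorphB /= (CrealP ry) //.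
    rewrite pmulr_lge0 // exprn_gt0 // normr_gt0 subr_eq0.
    by apply: contraNneq rr => <-.
have rq : q \in RP by exact: real_div rG (RP_XsubC rr) (XsubC_neq0 r) hq.
have hGy : forall y, G.[y] = q.[y] * (y - r) by move=> y; rewrite hq hornerM hornerXsubC.
case: (boolP (r < 0)) => hr0.
  apply: (step q ('X - r%:P) 0%N rq hq (size_XsubC r)).
    by rewrite comp_XsubC; exact: good_linpos (ltW hr0).
  move=> y ry y0 y1; have := nG y ry y0 y1; rewrite hGy pmulr_lge0 //.
  by rewrite subr_gt0 (lt_le_trans hr0 y0).
case: (boolP (1 < r)) => hr1.
  have hG' : G = (- q) * (r%:P - 'X) by rewrite hq; ring.
  have rnq : - q \in RP by rewrite rpredN.
  apply: (step (- q) (r%:P - 'X) 0%N rnq hG').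
  - by rewrite -opprB size_opp size_XsubC.
  - by rewrite comp_polyB comp_polyX comp_polyC; exact: good_linneg (ltW hr1).
  - move=> y ry y0 y1; have := nG y ry y0 y1; rewrite hG' hornerM pmulr_lge0 //.
    by rewrite hornerD hornerN hornerC hornerX subr_gt0 (le_lt_trans y1 hr1).
have r0 : 0 <= r by rewrite real_leNgt ?rpred0.
have r1 : r <= 1 by rewrite real_leNgt ?rpred1.
have [er0|nr0] := eqVneq r 0.
  have hG' : G = q * 'X by rewrite hq er0 subr0.
  apply: (step q 'X 0%N rq hG' (size_polyX _)).
    by rewrite comp_polyX; have := @good_linpos 0 (rpred0 _) (lexx _); rewrite subr0.
  apply: nonneg_ex rq (rpred0 _) (lexx _) ler01 _ => y ry y0 y1 yn0.
  have := nG y ry y0 y1; rewrite hGy er0 subr0 pmulr_lge0 //.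
  by rewrite lt_neqAle eq_sym yn0.
have [er1|nr1] := eqVneq r 1.
  have hG' : G = (- q) * (1 - 'X) by rewrite hq er1; ring.
  have rnq : - q \in RP by rewrite rpredN.
  apply: (step (- q) (1 - 'X) 0%N rnq hG').
  - by rewrite -opprB size_opp -[1]/(1%:P) size_XsubC.
  - rewrite comp_polyB comp_polyX -[1]/(1%:P) comp_polyC.
    by have := @good_linneg 1 (lexx _).
  - apply: nonneg_ex rnq (rpred1 _) ler01 (lexx _) _.
    move=> y ry y0 y1 yn1; have := nG y ry y0 y1; rewrite hG' hornerM pmulr_lge0 //.
    rewrite hornerD hornerN hornerX hornerC subr_gt0 lt_neqAle y1 andbT.
    exact: yn1.
have r0' : 0 < r by rewrite lt_neqAle eq_sym nr0 r0.
have r1' : r < 1 by rewrite lt_neqAle nr1 r1.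
have qr : q.[r] = 0.
  apply: interior rq rr r0' r1' _ => y ry y0 y1.
  by rewrite mulrC -hGy; exact: nG.
have qr2 : root q r by rewrite rootE qr.
case/factor_theorem: qr2 => q2 hq2.
have hG' : G = q2 * ('X - r%:P) ^+ 2 by rewrite hq hq2; ring.
have rL : ('X - r%:P) ^+ 2 \in RP by rewrite rpredX ?RP_XsubC.
have rq2 : q2 \in RP.
  by apply: real_div rG rL _ hG'; rewrite expf_neq0 ?XsubC_neq0.
apply: (step q2 _ 1%N rq2 hG' (size_exp_XsubC 2 r)).
  by rewrite expr2 comp_polyM comp_XsubC -expr2; exact: good_sq.
apply: nonneg_ex rq2 rr r0 r1 _ => y ry y0 y1 ynr.
have := nG y ry y0 y1; rewrite hG' hornerM horner_exp hornerXsubC pmulr_lge0 //.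
rewrite real_exprn_even_gt0 ?rpredB //=. by apply: contra ynr => /eqP h; apply/eqP; rewrite -[y](subrK r) h add0r.
exact: (gtr0_real r0').
Qed.


Lemma horner_Re (p : {poly C}) x : x \is Num.real -> (poly_Re p).[x] = 'Re p.[x].
Proof.
move=> rx; rewrite (horner_coef_wide x (size_poly _ _)) (horner_coef_wide x (leqnn _)).
rewrite raddf_sum; apply: eq_bigr => i _; rewrite coef_Re.
have rxi : x ^+ i \is Num.real by exact: rpredX.
by rewrite /= (ReMr rxi).
Qed.

Lemma Re_RP (p : {poly C}) : poly_Re p \in RP.
Proof. by apply/RPP => i; rewrite coef_Re Creal_Re. Qed.

Lemma sq1_ge0 (x : C) : x \is Num.real -> -1 <= x -> x <= 1 -> 0 <= 1 - x ^+ 2.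
Proof.
move=> rx h1 h2; have -> : 1 - x ^+ 2 = (1 - x) * (x - (-1)) by ring.
by rewrite mulr_ge0 // subr_ge0.
Qed.

Lemma good0 m : Good m 0.
Proof.
exists 0, 0; split; rewrite ?rpred0 ?size_poly0 //.
- by split; exact: par0.
- by rewrite expr0n /= mulr0 addr0.
Qed.


Lemma main_thm (k : nat) (Pt Qt : {poly C})
    (hPt : Pt \is a polyOver Num.real) (hQt : Qt \is a polyOver Num.real) :
  (exists P Q : {poly C},
     [/\ (size P <= k.+1)%N /\ (size Q <= k)%N,
         has_parity k P /\ has_parity k.+1 Q,
         (forall x : C, x \is Num.real -> -1 <= x <= 1 ->
            `|P.[x]| ^+ 2 + (1 - x ^+ 2) * `|Q.[x]| ^+ 2 = 1),
         poly_Re P = Pt & poly_Re Q = Qt])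
  <->
  [/\ (size Pt <= k.+1)%N, (size Qt <= k)%N,
      has_parity k Pt, has_parity k.+1 Qt &
      (forall x : C, x \is Num.real -> -1 <= x <= 1 ->
         Pt.[x] ^+ 2 + (1 - x ^+ 2) * Qt.[x] ^+ 2 <= 1)].
Proof.
have rPt : Pt \in RP := hPt.
have rQt : Qt \in RP := hQt.
split.
  case=> P [Q [[sP sQ] [pP pQ] hPQ <- <-]]; split.
  - exact: leq_trans (size_poly _ _) sP.
  - exact: leq_trans (size_poly _ _) sQ.
  - apply/hasparE => j hj; rewrite coef_Re; have := (hasparE _ _).1 pP j hj.
    by move=> ->; rewrite raddf0.
  - apply/hasparE => j hj; rewrite coef_Re; have := (hasparE _ _).1 pQ j hj.
    by move=> ->; rewrite raddf0.
  - move=> x rx /andP [x1 x2]; rewrite -[X in _ <= X](hPQ x rx) ?x1 ?x2 // !horner_Re //.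
    have h0 := sq1_ge0 rx x1 x2.
    apply: lerD.
      by rewrite normC2_Re_Im lerDl real_exprn_even_ge0 // Creal_Im.
    apply: (ler_wpM2l h0).
    by rewrite normC2_Re_Im lerDl real_exprn_even_ge0 // Creal_Im.
case=> sPt sQt pPt pQt hineq.
have pPt' := (hasparE _ _).1 pPt; have pQt' := (hasparE _ _).1 pQt.
set F := 1 - Pt ^+ 2 - (1 - 'X^2) * Qt ^+ 2.
have rF : F \in RP.
  by rewrite /F !rpredB ?rpred1 ?rpredM ?rpredX ?polyOverX ?rpredB ?rpred1 ?rpredX ?polyOverX.
have parF : par false F.
  apply: parD; first apply: parD; first exact: parC.
    by apply: parN; rewrite expr2; apply: par_eq (parM pPt' pPt'); rewrite addbb.
  apply: parN; apply: par_eq (parM par1mX2 _); last first.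
    by rewrite expr2; exact: (parM pQt' pQt').
  by rewrite addbb.
have sF : (size F <= (k.*2).+2)%N.
  rewrite /F (leq_trans (size_add _ _)) // size_opp geq_max; apply/andP; split.
    rewrite (leq_trans (size_add _ _)) // size_opp geq_max size_poly1 /=.
    rewrite expr2 (leq_trans (size_mul_leq _ _)) //.
    apply: leq_trans (predD_le sPt sPt) _; lia.
  rewrite (leq_trans (size_mul_leq _ _)) //.
  have h : (size (Qt ^+ 2) <= (k + k).-1)%N.
    by rewrite expr2 (leq_trans (size_mul_leq _ _)) // predD_le.
  apply: leq_trans (predD_le size_1mX2 h) _; lia.
set G := even_poly F.
have hFG : F = G \Po 'X^2.
  rewrite -{1}(poly_even_odd F).
  have -> : odd_poly F = 0.
    by apply/polyP => i; rewrite coef_odd_poly coef0 parF //= odd_double.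
  by rewrite comp_poly0 mul0r addr0.
have rG : G \in RP by apply/RPP => i; rewrite coef_even_poly; exact: (RPP _ rF).
have sG : (size G <= k.+1)%N.
  apply/leq_sizeP => j hj; rewrite coef_even_poly nth_default //.
  by apply: leq_trans sF _; rewrite -!addnn; lia.
have hFx : forall x, F.[x] = 1 - (Pt.[x] ^+ 2 + (1 - x ^+ 2) * Qt.[x] ^+ 2).
  move=> x; rewrite /F !(hornerD, hornerN, hornerM, horner_exp, hornerXn, hornerX, hornerC).
  ring.
have nG : nonneg01 G.
  move=> y ry y0 y1; set x := sqrtC y.
  have x0 : 0 <= x by rewrite sqrtC_ge0.
  have rx : x \is Num.real by exact: sqrtC_real.
  have x2 : x ^+ 2 = y by exact: sqrtCK.
  have x1 : x <= 1.
    by rewrite -ler_sqr ?nnegrE ?ler01 // x2 expr1n.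
  have -> : G.[y] = F.[x] by rewrite hFG horner_comp hornerXn x2.
  rewrite hFx subr_ge0; apply: hineq => //.
  by rewrite x1 andbT (le_trans _ x0) // lerN10.
have [A [B [rA rB [sA sB] [pA pB] hAB]]] : Good k F.
  have [G0|G0] := eqVneq G 0; first by rewrite hFG G0 comp_poly0; exact: good0.
  rewrite hFG; apply: (good_mono (F := G \Po 'X^2) _ (main_ind (leqnn _) rG G0 nG)).
  by rewrite -subn1 leq_subLR add1n.
exists (Pt + 'i *: A), (Qt + 'i *: B); split.
- split.
    by rewrite (leq_trans (size_add _ _)) // geq_max sPt (leq_trans (size_scale_leq _ _)).
  by rewrite (leq_trans (size_add _ _)) // geq_max sQt (leq_trans (size_scale_leq _ _)).
- split; apply/hasparE; apply: parD => //; apply: parZ => //=.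
- move=> x rx _.
  have rPx := RP_horner rPt rx; have rQx := RP_horner rQt rx.
  have rAx := RP_horner rA rx; have rBx := RP_horner rB rx.
  rewrite !hornerD !hornerZ !normC2_rect //.
  have h : A.[x] ^+ 2 + (1 - x ^+ 2) * B.[x] ^+ 2 =
           1 - (Pt.[x] ^+ 2 + (1 - x ^+ 2) * Qt.[x] ^+ 2).
    rewrite -hFx hAB !(hornerD, hornerN, hornerM, horner_exp, hornerXn, hornerX, hornerC).
    by [].
  transitivity ((Pt.[x] ^+ 2 + (1 - x ^+ 2) * Qt.[x] ^+ 2) +
                (A.[x] ^+ 2 + (1 - x ^+ 2) * B.[x] ^+ 2)); first ring.
  rewrite h; ring.
- apply/polyP => j; rewrite coef_Re coefD coefZ Re_rect //; [exact: (RPP _ rPt) | exact: (RPP _ rA)].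
- apply/polyP => j; rewrite coef_Re coefD coefZ Re_rect //; [exact: (RPP _ rQt) | exact: (RPP _ rB)].
Qed.

End Work.

Unset Implicit Arguments.
Theorem mainTheorem4 (C : numClosedFieldType) (k : nat) (Pt Qt : {poly C})
    (hPt : Pt \is a polyOver Num.real) (hQt : Qt \is a polyOver Num.real) :
  (exists P Q : {poly C},
     [/\ (size P <= k.+1)%N /\ (size Q <= k)%N,
         has_parity k P /\ has_parity k.+1 Q,
         (forall x : C, x \is Num.real -> -1 <= x <= 1 ->
            `|P.[x]| ^+ 2 + (1 - x ^+ 2) * `|Q.[x]| ^+ 2 = 1),
         poly_Re P = Pt & poly_Re Q = Qt])
  <->
  [/\ (size Pt <= k.+1)%N, (size Qt <= k)%N,
      has_parity k Pt, has_parity k.+1 Qt &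
      (forall x : C, x \is Num.real -> -1 <= x <= 1 ->
         Pt.[x] ^+ 2 + (1 - x ^+ 2) * Qt.[x] ^+ 2 <= 1)].
Proof. exact: main_thm. Qed.
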